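(* Let $L\subset\mathbb{C}$ be a lattice. If for some $p_0\in\mathbb{C}$ and some $\alpha\in(0,\pi)$ there are more than three pairs of periodic trajectories of the billiard associated to $L$ which pass through $p_0$ and form the angle $\alpha$ at $p_0$ (equivalently: there are at least four directions $v\in\mathbb{C}^*$, pairwise not real-proportional, with $v\in\mathbb{R}\cdot L$ and $e^{i\alpha}v\in\mathbb{R}\cdot L$), then the elliptic curve $\mathbb{C}/L$ has complex multiplication. Conversely, if $\mathbb{C}/L$ has complex multiplication then for infinitely many $\alpha\in(0,\pi)$ and every $p_0\in\mathbb{C}$ there are infinitely many pairs of periodic trajectories passing through $p_0$ and forming the angle $\alpha$ at $p_0$.
   Context: The billiard associated to a lattice $L\subset\mathbb{C}$ is the billiard on a parallelogram table determined by $L$; directions are nonzero complex numbers, and a trajectory with direction $v\in\mathbb{C}^*$ is periodic if and only if $v\in\mathbb{R}\cdot L=\{t\lambda: t\in\mathbb{R},\lambda\in L\}$. Two periodic trajectories through $p_0$ with directions $v,v'$ form the angle $\alpha$ at $p_0$ if $v'=e^{i\alpha}v$ up to a positive real factor; pairs are counted up to real proportionality of the direction $v$. $\mathbb{C}/L$ has complex multiplication if its endomorphism ring is strictly larger than $\mathbb{Z}$, i.e. if $L$ is homothetic to $\mathbb{Z}\tau+\mathbb{Z}$ with $\tau$ an imaginary quadratic number. *)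

(* Defs.v *)
From Stdlib Require Export Reals ZArith List.
From Coquelicot Require Export Coquelicot.

(* The lattice L = Z w1 + Z w2, with w1, w2 R-linearly independent. *)
Definition lattice_basis (w1 w2 : C) : Prop :=
  (Re w1 * Im w2 - Im w1 * Re w2 <> 0)%R.

Definition in_lattice (w1 w2 z : C) : Prop :=
  exists m n : Z, z = Cplus (Cmult (RtoC (IZR m)) w1) (Cmult (RtoC (IZR n)) w2).

Definition in_RL (w1 w2 v : C) : Prop :=
  exists (t : R) (l : C), in_lattice w1 w2 l /\ v = Cmult (RtoC t) l.

(* A trajectory with direction v (nonzero) is periodic iff v in R.L. *)
Definition periodic_dir (w1 w2 v : C) : Prop :=
  v <> RtoC 0 /\ in_RL w1 w2 v.

Definition expi (a : R) : C := (cos a, sin a).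

(* The pair of periodic trajectories through p0 with directions v and
   e^{i a} v (these form the angle a at p0). *)
Definition periodic_pair_at_angle (w1 w2 : C) (p0 : C) (a : R) (v : C) : Prop :=
  periodic_dir w1 w2 v /\ periodic_dir w1 w2 (Cmult (expi a) v).

Definition real_proportional (v v' : C) : Prop :=
  exists t : R, v' = Cmult (RtoC t) v.

(* at least n pairs, counted up to real proportionality of v *)
Definition at_least_n_pairs (w1 w2 p0 : C) (a : R) (n : nat) : Prop :=
  exists f : nat -> C,
    (forall i, (i < n)%nat -> periodic_pair_at_angle w1 w2 p0 a (f i)) /\
    (forall i j, (i < n)%nat -> (j < n)%nat -> i <> j ->
        ~ real_proportional (f i) (f j)).

Definition infinitely_many_pairs (w1 w2 p0 : C) (a : R) : Prop :=
  forall n : nat, at_least_n_pairs w1 w2 p0 a n.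

(* C/L has complex multiplication: End(C/L) = { mu : mu L subset L } is
   strictly larger than Z. *)
Definition has_CM (w1 w2 : C) : Prop :=
  exists mu : C, (forall k : Z, mu <> RtoC (IZR k)) /\
    forall l : C, in_lattice w1 w2 l -> in_lattice w1 w2 (Cmult mu l).

(* Main.v *)
Require Import Defs.
From Stdlib Require Import Lra Lia Psatz.

Definition lat (w1 w2 : C) (m n : Z) : C :=
  Cplus (Cmult (RtoC (IZR m)) w1) (Cmult (RtoC (IZR n)) w2).

Definition cross (z w : C) : R := fst z * snd w - snd z * fst w.

Ltac ceq := apply injective_projections;
  unfold lat, cross, expi, Cmult, Cplus, Copp, Cminus, RtoC; simpl.

Lemma cross_lat a1 b1 a2 b2 t m n t' m' n' :
  cross (Cmult (RtoC t) (lat (a1,b1) (a2,b2) m n)) (Cmult (RtoC t') (lat (a1,b1) (a2,b2) m' n'))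
  = t * t' * (IZR m * IZR n' - IZR n * IZR m') * (a1 * b2 - b1 * a2).
Proof. unfold lat, cross, Cmult, Cplus, RtoC; simpl; ring. Qed.

Lemma cross_E a z w : cross (Cmult (expi a) z) (Cmult (expi a) w) = cross z w.
Proof.
  destruct z as [x y], w as [u v]; unfold cross, expi, Cmult; simpl.
  pose proof (sin2_cos2 a). unfold Rsqr in H.
  transitivity ((sin a * sin a + cos a * cos a) * (x * v - y * u)); [ring|].
  rewrite H; ring.
Qed.

Lemma cross_prop z w : z <> RtoC 0 -> cross z w = 0 -> real_proportional z w.
Proof.
  destruct z as [x y], w as [u v]; unfold cross, RtoC, real_proportional; simpl.
  intros Hz Hc.
  assert (HN : x * x + y * y <> 0).
  { intro HN. apply Hz. assert (x = 0) by nra. assert (y = 0) by nra. subst; reflexivity. }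
  exists ((x * u + y * v) / (x * x + y * y)).
  unfold Cmult; simpl. apply injective_projections; simpl.
  - field_simplify_eq; auto. replace (u * y ^ 2) with (y * (y * u)) by ring.
    replace (y * u) with (x * v) by lra. ring.
  - field_simplify_eq; auto. replace (v * x ^ 2) with (x * (x * v)) by ring.
    replace (x * v) with (y * u) by lra. ring.
Qed.

Lemma extract w1 w2 p0 a v : periodic_pair_at_angle w1 w2 p0 a v ->
  exists t m n s p q, v <> RtoC 0 /\ v = Cmult (RtoC t) (lat w1 w2 m n) /\
    Cmult (expi a) (Cmult (RtoC t) (lat w1 w2 m n)) = Cmult (RtoC s) (lat w1 w2 p q).
Proof.
  intros [[nz [t [l [[m [n el]] ev]]]] [_ [s [l' [[p [q el']] ev']]]]].
  subst l l' v. exists t, m, n, s, p, q. split; [exact nz|split; [reflexivity|exact ev']].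
Qed.

Lemma t_nz t z : Cmult (RtoC t) z <> RtoC 0 -> t <> 0.
Proof. intros H ->. apply H. destruct z; ceq; ring. Qed.

Lemma keyeq a1 b1 a2 b2 a t0 m0 n0 s0 p0 q0 t1 m1 n1 s1 p1 q1 :
  a1 * b2 - b1 * a2 <> 0 ->
  Cmult (expi a) (Cmult (RtoC t0) (lat (a1,b1) (a2,b2) m0 n0)) = Cmult (RtoC s0) (lat (a1,b1) (a2,b2) p0 q0) ->
  Cmult (expi a) (Cmult (RtoC t1) (lat (a1,b1) (a2,b2) m1 n1)) = Cmult (RtoC s1) (lat (a1,b1) (a2,b2) p1 q1) ->
  t0 * t1 * (IZR m0 * IZR n1 - IZR n0 * IZR m1) = s0 * s1 * (IZR p0 * IZR q1 - IZR q0 * IZR p1).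
Proof.
  intros hD E0 E1.
  pose proof (cross_E a (Cmult (RtoC t0) (lat (a1,b1) (a2,b2) m0 n0)) (Cmult (RtoC t1) (lat (a1,b1) (a2,b2) m1 n1))) as H.
  rewrite E0, E1, !cross_lat in H.
  apply Rmult_eq_reg_r with (a1 * b2 - b1 * a2); auto.
Qed.

Lemma part1 a1 b1 a2 b2 (hD : a1 * b2 - b1 * a2 <> 0) p0 a (Ha : 0 < a < PI) :
  at_least_n_pairs (a1,b1) (a2,b2) p0 a 4 -> has_CM (a1,b1) (a2,b2).
Proof.
  set (w1 := (a1,b1)). set (w2 := (a2,b2)).
  intros [f [Hp Hn]].
  destruct (extract _ _ _ _ _ (Hp 0%nat ltac:(lia))) as [t0 [m0 [n0 [s0 [p0' [q0' [nz0 [ev0 E0]]]]]]]].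
  destruct (extract _ _ _ _ _ (Hp 1%nat ltac:(lia))) as [t1 [m1 [n1 [s1 [p1' [q1' [nz1 [ev1 E1]]]]]]]].
  destruct (extract _ _ _ _ _ (Hp 2%nat ltac:(lia))) as [t2 [m2 [n2 [s2 [p2' [q2' [nz2 [ev2 E2]]]]]]]].
  pose proof (Hn 0%nat 1%nat ltac:(lia) ltac:(lia) ltac:(lia)) as N01.
  pose proof (Hn 0%nat 2%nat ltac:(lia) ltac:(lia) ltac:(lia)) as N02.
  pose proof (Hn 1%nat 2%nat ltac:(lia) ltac:(lia) ltac:(lia)) as N12.
  rewrite ev0 in nz0, N01, N02. rewrite ev1 in nz1, N01, N12. rewrite ev2 in nz2, N02, N12.
  pose proof (t_nz _ _ nz0) as t0nz. pose proof (t_nz _ _ nz1) as t1nz. pose proof (t_nz _ _ nz2) as t2nz.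
  pose proof (keyeq _ _ _ _ _ _ _ _ _ _ _ _ _ _ _ _ _ hD E0 E1) as K01.
  pose proof (keyeq _ _ _ _ _ _ _ _ _ _ _ _ _ _ _ _ _ hD E0 E2) as K02.
  pose proof (keyeq _ _ _ _ _ _ _ _ _ _ _ _ _ _ _ _ _ hD E1 E2) as K12.
  remember (m0 * n1 - n0 * m1)%Z as z01 eqn:Ez01.
  remember (m0 * n2 - n0 * m2)%Z as z02 eqn:Ez02.
  remember (m1 * n2 - n1 * m2)%Z as z12 eqn:Ez12.
  remember (p0' * q1' - q0' * p1')%Z as y01 eqn:Ey01.
  remember (p0' * q2' - q0' * p2')%Z as y02 eqn:Ey02.
  remember (p1' * q2' - q1' * p2')%Z as y12 eqn:Ey12.
  assert (R01 : IZR z01 = IZR m0 * IZR n1 - IZR n0 * IZR m1) by (subst; rewrite minus_IZR, !mult_IZR; ring).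
  assert (R02 : IZR z02 = IZR m0 * IZR n2 - IZR n0 * IZR m2) by (subst; rewrite minus_IZR, !mult_IZR; ring).
  assert (R12 : IZR z12 = IZR m1 * IZR n2 - IZR n1 * IZR m2) by (subst; rewrite minus_IZR, !mult_IZR; ring).
  assert (S01 : IZR y01 = IZR p0' * IZR q1' - IZR q0' * IZR p1') by (subst; rewrite minus_IZR, !mult_IZR; ring).
  assert (S02 : IZR y02 = IZR p0' * IZR q2' - IZR q0' * IZR p2') by (subst; rewrite minus_IZR, !mult_IZR; ring).
  assert (S12 : IZR y12 = IZR p1' * IZR q2' - IZR q1' * IZR p2') by (subst; rewrite minus_IZR, !mult_IZR; ring).
  rewrite <- R01, <- S01 in K01. rewrite <- R02, <- S02 in K02. rewrite <- R12, <- S12 in K12.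
  assert (Hc : forall t m n t' m' n', t <> 0 -> Cmult (RtoC t) (lat w1 w2 m n) <> RtoC 0 ->
     ~ real_proportional (Cmult (RtoC t) (lat w1 w2 m n)) (Cmult (RtoC t') (lat w1 w2 m' n')) ->
     t' <> 0 -> IZR m * IZR n' - IZR n * IZR m' <> 0).
  { intros t m n t' m' n' ht hz hnp ht' hc. apply hnp. apply cross_prop; auto.
    unfold w1, w2. rewrite cross_lat, hc. ring. }
  assert (c01 : IZR z01 <> 0) by (rewrite R01; eauto).
  assert (c02 : IZR z02 <> 0) by (rewrite R02; eauto).
  assert (c12 : IZR z12 <> 0) by (rewrite R12; eauto).
  assert (d01 : IZR y01 <> 0) by (intro h; rewrite h in K01; apply c01;
     apply Rmult_eq_reg_l with (t0 * t1); [lra | apply Rmult_integral_contrapositive; auto]).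
  assert (d02 : IZR y02 <> 0) by (intro h; rewrite h in K02; apply c02;
     apply Rmult_eq_reg_l with (t0 * t2); [lra | apply Rmult_integral_contrapositive; auto]).
  assert (s0nz : s0 <> 0) by (intro h; rewrite h in K01; apply c01;
     apply Rmult_eq_reg_l with (t0 * t1); [lra | apply Rmult_integral_contrapositive; auto]).
  assert (s1nz : s1 <> 0) by (intro h; rewrite h in K01; apply c01;
     apply Rmult_eq_reg_l with (t0 * t1); [lra | apply Rmult_integral_contrapositive; auto]).
  assert (s2nz : s2 <> 0) by (intro h; rewrite h in K02; apply c02;
     apply Rmult_eq_reg_l with (t0 * t2); [lra | apply Rmult_integral_contrapositive; auto]).
  remember (y01 * y02 * z12)%Z as N eqn:EN.
  remember (z01 * z02 * y12)%Z as A eqn:EA.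
  remember (y02 * z12 * z01)%Z as B eqn:EB.
  assert (RN : IZR N = IZR y01 * IZR y02 * IZR z12) by (subst N; rewrite !mult_IZR; ring).
  assert (RA : IZR A = IZR z01 * IZR z02 * IZR y12) by (subst A; rewrite !mult_IZR; ring).
  assert (RB : IZR B = IZR y02 * IZR z12 * IZR z01) by (subst B; rewrite !mult_IZR; ring).
  assert (eA : IZR N * s0 / (t0 * t0) * s0 = IZR A).
  { assert (h : s1 * s2 * t1 * t2 * (IZR N * s0 * s0) = s1 * s2 * t1 * t2 * (IZR A * t0 * t0)).
    { rewrite RN, RA.
      transitivity ((s0 * s1 * IZR y01) * (s0 * s2 * IZR y02) * (t1 * t2 * IZR z12)); [ring|].
      rewrite <- K01, <- K02, K12. ring. }
    apply Rmult_eq_reg_l in h.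
    - replace (IZR N * s0 / (t0 * t0) * s0) with ((IZR N * s0 * s0) / (t0 * t0)) by (field; auto).
      rewrite h. field; auto.
    - repeat (apply Rmult_integral_contrapositive; split); auto. }
  assert (eB : IZR N * s0 / (t0 * t1) * s1 = IZR B).
  { rewrite RN, RB. field_simplify_eq; auto.
    transitivity (IZR y02 * IZR z12 * (s0 * s1 * IZR y01)); [ring|].
    rewrite <- K01. ring. }
  set (M := Cmult (RtoC (IZR N * s0 / t0)) (expi a)).
  assert (Cl1 : Cmult M (lat w1 w2 m0 n0) = Cmult (RtoC (IZR A)) (lat w1 w2 p0' q0')).
  { transitivity (Cmult (RtoC (IZR N * s0 / (t0 * t0))) (Cmult (expi a) (Cmult (RtoC t0) (lat w1 w2 m0 n0)))).
    { unfold M. generalize (lat w1 w2 m0 n0); intros [x y]; ceq; field; auto. }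
    rewrite E0.
    transitivity (Cmult (RtoC (IZR N * s0 / (t0 * t0) * s0)) (lat w1 w2 p0' q0')).
    { generalize (lat w1 w2 p0' q0'); intros [x y]; ceq; ring. }
    rewrite eA; reflexivity. }
  assert (Cl2 : Cmult M (lat w1 w2 m1 n1) = Cmult (RtoC (IZR B)) (lat w1 w2 p1' q1')).
  { transitivity (Cmult (RtoC (IZR N * s0 / (t0 * t1))) (Cmult (expi a) (Cmult (RtoC t1) (lat w1 w2 m1 n1)))).
    { unfold M. generalize (lat w1 w2 m1 n1); intros [x y]; ceq; field; auto. }
    rewrite E1.
    transitivity (Cmult (RtoC (IZR N * s0 / (t0 * t1) * s1)) (lat w1 w2 p1' q1')).
    { generalize (lat w1 w2 p1' q1'); intros [x y]; ceq; ring. }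
    rewrite eB; reflexivity. }
  assert (Nnz : IZR N <> 0) by (rewrite RN; repeat (apply Rmult_integral_contrapositive; split); auto).
  exists (Cmult (RtoC (IZR z01 * (IZR N * s0 / t0))) (expi a)). split.
  - intros k h. apply (f_equal snd) in h. unfold expi, Cmult, RtoC in h; simpl in h.
    assert (sin a > 0) by (apply sin_gt_0; lra).
    assert (IZR z01 * (IZR N * s0 / t0) <> 0).
    { apply Rmult_integral_contrapositive; split; auto. unfold Rdiv.
      repeat (apply Rmult_integral_contrapositive; split); auto.
      apply Rinv_neq_0_compat; auto. }
    assert (IZR z01 * (IZR N * s0 / t0) * sin a <> 0) by (apply Rmult_integral_contrapositive; split; lra).
    apply H1. lra.
  - intros l [m [n ->]]. fold (lat w1 w2 m n).
    assert (Hw : Cmult (Cmult (RtoC (IZR z01 * (IZR N * s0 / t0))) (expi a)) (lat w1 w2 m n) =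
       Cplus (Cmult (RtoC (IZR (m * n1 - n * m1))) (Cmult M (lat w1 w2 m0 n0)))
             (Cmult (RtoC (IZR (n * m0 - m * n0))) (Cmult M (lat w1 w2 m1 n1)))).
    { unfold M, w1, w2. rewrite R01. ceq; repeat (rewrite plus_IZR || rewrite minus_IZR || rewrite mult_IZR); ring. }
    rewrite Cl1, Cl2 in Hw. rewrite Hw.
    exists ((m * n1 - n * m1) * A * p0' + (n * m0 - m * n0) * B * p1')%Z.
    exists ((m * n1 - n * m1) * A * q0' + (n * m0 - m * n0) * B * q1')%Z.
    fold (lat w1 w2 ((m * n1 - n * m1) * A * p0' + (n * m0 - m * n0) * B * p1')%Z
       ((m * n1 - n * m1) * A * q0' + (n * m0 - m * n0) * B * q1')%Z).
    unfold w1, w2. ceq; repeat (rewrite plus_IZR || rewrite minus_IZR || rewrite mult_IZR); ring.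
Qed.

Lemma angle X y : 0 < y ->
  let M := sqrt (X * X + y * y) in
  0 < M /\ 0 < acos (X / M) < PI /\ cos (acos (X / M)) = X / M /\ sin (acos (X / M)) = y / M.
Proof.
  intros hy M.
  assert (hM : 0 < M) by (apply sqrt_lt_R0; nra).
  assert (hMM : M * M = X * X + y * y) by (apply sqrt_sqrt; nra).
  assert (hXM : Rabs X < M).
  { rewrite <- sqrt_Rsqr_abs. unfold Rsqr. apply sqrt_lt_1; nra. }
  apply Rabs_def2 in hXM.
  assert (hu : -1 < X / M < 1).
  { split; [apply Rmult_lt_reg_r with M; auto | apply Rmult_lt_reg_r with M; auto];
    unfold Rdiv; rewrite Rmult_assoc, Rinv_l by lra; lra. }
  split; [auto|split; [apply acos_bound_lt; auto|split]].
  - apply cos_acos; lra.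
  - rewrite sin_acos by lra. unfold Rsqr.
    replace (1 - X / M * (X / M)) with (y / M * (y / M)).
    + apply sqrt_square. apply Rlt_le, Rdiv_lt_0_compat; auto.
    + field_simplify_eq; [|lra]. nra.
Qed.

Lemma avoid (g : nat -> R) (ginj : forall i j, g i = g j -> i = j) (l : list R) :
  exists K, forall k, (K <= k)%nat -> ~ In (g k) l.
Proof.
  induction l as [|x l [K HK]].
  - exists 0%nat. intros k _ h; inversion h.
  - destruct (Classical_Prop.classic (exists j, g j = x)) as [[j hj]|hn].
    + exists (Nat.max K (S j)). intros k hk [h|h].
      * subst x. apply ginj in h. lia.
      * apply (HK k); auto. lia.
    + exists K. intros k hk [h|h]. apply hn; eauto. apply (HK k); auto.
Qed.

Lemma expi_nz a v : Cmult (expi a) v = RtoC 0 -> v = RtoC 0.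
Proof.
  destruct v as [p q]. unfold expi, Cmult, RtoC; simpl. intros h.
  pose proof (f_equal fst h) as h1. pose proof (f_equal snd h) as h2. simpl in h1, h2.
  pose proof (sin2_cos2 a) as hs. unfold Rsqr in hs.
  apply injective_projections; simpl.
  - transitivity (cos a * (cos a * p - sin a * q) + sin a * (cos a * q + sin a * p)).
    + transitivity ((sin a * sin a + cos a * cos a) * p); [rewrite hs; ring | ring].
    + rewrite h1, h2; ring.
  - transitivity (cos a * (cos a * q + sin a * p) - sin a * (cos a * p - sin a * q)).
    + transitivity ((sin a * sin a + cos a * cos a) * q); [rewrite hs; ring | ring].
    + rewrite h1, h2; ring.
Qed.

Lemma core a1 b1 a2 b2 (hD : a1 * b2 - b1 * a2 <> 0) x y (hy : 0 < y)
  (Hmu : forall m n, exists p q, Cmult (x,y) (lat (a1,b1) (a2,b2) m n) = lat (a1,b1) (a2,b2) p q) :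
  forall excluded : list R, exists a : R,
       (0 < a < PI)%R /\ ~ In a excluded /\
       forall p0 : C, infinitely_many_pairs (a1,b1) (a2,b2) p0 a.
Proof.
  set (w1 := (a1,b1)). set (w2 := (a2,b2)).
  set (Xk := fun k : nat => x + IZR (Z.of_nat k)).
  set (Mk := fun k : nat => sqrt (Xk k * Xk k + y * y)).
  set (g := fun k : nat => acos (Xk k / Mk k)).
  assert (ginj : forall i j, g i = g j -> i = j).
  { intros i j h.
    destruct (angle (Xk i) y hy) as [hMi [_ [ci si]]].
    destruct (angle (Xk j) y hy) as [hMj [_ [cj sj]]].
    fold (Mk i) in *. fold (Mk j) in *. fold (g i) in *. fold (g j) in *.
    assert (e1 : y / Mk i = y / Mk j) by (rewrite <- si, <- sj, h; reflexivity).
    assert (e2 : Xk i / Mk i = Xk j / Mk j) by (rewrite <- ci, <- cj, h; reflexivity).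
    assert (eM : Mk i = Mk j).
    { replace (Mk i) with (y / (y / Mk i)) by (field; lra). rewrite e1. field; lra. }
    rewrite eM in e2. assert (Xk i = Xk j).
    { apply Rmult_eq_reg_r with (/ Mk j); [exact e2 | apply Rinv_neq_0_compat; lra]. }
    unfold Xk in H. apply Nat2Z.inj, eq_IZR. lra. }
  intros excluded. destruct (avoid g ginj excluded) as [K HK].
  destruct (angle (Xk K) y hy) as [hM [ha [ca sa]]]. fold (Mk K) in *. fold (g K) in *.
  exists (g K). split; [exact ha|split; [apply HK; lia|]].
  intros p0 n.
  set (f := fun j : nat => lat w1 w2 1 (Z.of_nat j)).
  assert (fnz : forall j, f j <> RtoC 0).
  { intros j h. unfold f, lat, w1, w2, Cmult, Cplus, RtoC in h.
    pose proof (f_equal fst h) as h1. pose proof (f_equal snd h) as h2. simpl in h1, h2.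
    apply hD. set (q := IZR (Z.of_nat j)) in *.
    assert (a1 = - q * a2) by lra. assert (b1 = - q * b2) by lra. subst a1 b1. ring. }
  assert (hE : expi (g K) = Cmult (RtoC (/ Mk K)) (Cplus (x,y) (RtoC (IZR (Z.of_nat K))))).
  { unfold expi. rewrite ca, sa. unfold Xk. ceq; field; lra. }
  exists f. split.
  - intros j _. split.
    + split; [apply fnz|]. exists 1, (f j). split.
      * exists 1%Z, (Z.of_nat j). reflexivity.
      * generalize (f j). intros [u v]. ceq; ring.
    + split.
      * intro h. apply expi_nz in h. apply (fnz j h).
      * destruct (Hmu 1%Z (Z.of_nat j)) as [p [q hp]].
        exists (/ Mk K), (lat w1 w2 (p + Z.of_nat K * 1) (q + Z.of_nat K * Z.of_nat j)).
        split; [eexists; eexists; reflexivity|].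
        rewrite hE.
        transitivity (Cmult (RtoC (/ Mk K)) (Cplus (Cmult (x,y) (f j)) (Cmult (RtoC (IZR (Z.of_nat K))) (f j)))).
        { generalize (f j). intros [u v]. ceq; ring. }
        unfold f at 1. fold w1 w2 in hp. rewrite hp. unfold f, w1, w2.
        ceq; repeat (rewrite plus_IZR || rewrite minus_IZR || rewrite mult_IZR); ring.
  - intros i j hi hj hij [t ht].
    assert (h0 : cross (f i) (Cmult (RtoC t) (f i)) = 0) by (generalize (f i); intros [u v]; unfold cross, Cmult, RtoC; simpl; ring).
    rewrite <- ht in h0. unfold f, w1, w2, lat, cross, Cmult, Cplus, RtoC in h0; simpl in h0.
    assert (h1 : (IZR (Z.of_nat j) - IZR (Z.of_nat i)) * (a1 * b2 - b1 * a2) = 0) by (rewrite <- h0; ring).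
    apply Rmult_integral in h1. destruct h1 as [h1|h1]; [|auto].
    apply hij, Nat2Z.inj, eq_IZR. lra.
Qed.

Theorem theorem1p5 (w1 w2 : C) (hL : lattice_basis w1 w2) :
  (forall (p0 : C) (a : R), (0 < a < PI)%R ->
     at_least_n_pairs w1 w2 p0 a 4 -> has_CM w1 w2) /\
  (has_CM w1 w2 ->
     forall excluded : list R, exists a : R,
       (0 < a < PI)%R /\ ~ In a excluded /\
       forall p0 : C, infinitely_many_pairs w1 w2 p0 a).
Proof.
  destruct w1 as [a1 b1], w2 as [a2 b2].
  unfold lattice_basis, Re, Im in hL; simpl in hL.
  split.
  - intros p0 a Ha H. exact (part1 a1 b1 a2 b2 hL p0 a Ha H).
  - intros [[x y] [Hnz Hmu]].
    assert (Hm : forall m n, exists p q, Cmult (x,y) (lat (a1,b1) (a2,b2) m n) = lat (a1,b1) (a2,b2) p q).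
    { intros m n. destruct (Hmu (lat (a1,b1) (a2,b2) m n)) as [p [q h]].
      - exists m, n; reflexivity.
      - exists p, q; exact h. }
    assert (hy : y <> 0).
    { intro hy0. subst y. destruct (Hm 1%Z 0%Z) as [p [q h]].
      unfold lat, Cmult, Cplus, RtoC in h.
      pose proof (f_equal fst h) as h1. pose proof (f_equal snd h) as h2. simpl in h1, h2.
      assert (e1 : x * a1 - IZR p * a1 = IZR q * a2) by (ring_simplify in h1; lra).
      assert (e2 : x * b1 - IZR p * b1 = IZR q * b2) by (ring_simplify in h2; lra).
      assert (hx : (x - IZR p) * (a1 * b2 - b1 * a2) = 0).
      { replace ((x - IZR p) * (a1 * b2 - b1 * a2)) with ((x * a1 - IZR p * a1) * b2 - (x * b1 - IZR p * b1) * a2) by ring.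
        rewrite e1, e2. ring. }
      apply Rmult_integral in hx. destruct hx as [hx|hx]; [|lra].
      apply (Hnz p). unfold RtoC. f_equal. lra. }
    destruct (Rlt_or_le 0 y) as [hp|hn].
    + exact (core a1 b1 a2 b2 hL x y hp Hm).
    + apply (core a1 b1 a2 b2 hL (- x) (- y)); [lra|].
      intros m n. destruct (Hm m n) as [p [q h]]. exists (- p)%Z, (- q)%Z.
      transitivity (Copp (Cmult (x,y) (lat (a1,b1) (a2,b2) m n))).
      * generalize (lat (a1,b1) (a2,b2) m n). intros [u v]. ceq; ring.
      * rewrite h. ceq; rewrite !opp_IZR; ring.
Qed.
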